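(* Let $X,Y$ be u.l.f.\ metric spaces and let $\alpha\colon X\to\mathrm{Fin}(Y)$ and $\beta\colon Y\to\mathrm{Fin}(X)$ be functions such that (Bij1) whenever $f\colon X\to Y$ and $g\colon Y\to X$ satisfy $f(x)\in\alpha(x)$ for all $x\in X$ and $g(y)\in\beta(y)$ for all $y\in Y$, then $f$ and $g$ are mutually inverse coarse equivalences (in particular all $\alpha(x)$, $\beta(y)$ are nonempty); and (Bij2) for every finite $A\subseteq X$ and finite $B\subseteq Y$, $|A|\le|\bigcup_{x\in A}\alpha(x)|$ and $|B|\le|\bigcup_{y\in B}\beta(y)|$. Then every function $f\colon X\to Y$ with $f(x)\in\alpha(x)$ for all $x\in X$ is close to a bijective coarse equivalence $X\to Y$.
   Context: $\mathrm{Fin}(Y)$ is the set of finite subsets of $Y$. A map $f\colon X\to Y$ is coarse if for every $r>0$ there is $s>0$ with $d_X(x,x')\le r\Rightarrow d_Y(f(x),f(x'))\le s$; $f,f'$ are close if $\sup_x d_Y(f(x),f'(x))<\infty$; coarse maps $f\colon X\to Y$, $g\colon Y\to X$ are mutually inverse coarse equivalences if $f\circ g$ is close to $\mathrm{Id}_Y$ and $g\circ f$ close to $\mathrm{Id}_X$. *)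

(* Defs.v *)
From Stdlib Require Import Reals List.
Import ListNotations.
Open Scope R_scope.

Definition is_metric {X : Type} (d : X -> X -> R) : Prop :=
  (forall x y, 0 <= d x y) /\
  (forall x y, d x y = 0 <-> x = y) /\
  (forall x y, d x y = d y x) /\
  (forall x y z, d x z <= d x y + d y z).

Definition ulf {X : Type} (d : X -> X -> R) : Prop :=
  forall r : R, exists N : nat, forall (x : X) (L : list X),
    NoDup L -> (forall z, In z L -> d x z <= r) -> (length L <= N)%nat.

Definition coarse {X Y : Type} (dX : X -> X -> R) (dY : Y -> Y -> R)
  (f : X -> Y) : Prop :=
  forall r : R, 0 < r -> exists s : R, 0 < s /\
    forall x x', dX x x' <= r -> dY (f x) (f x') <= s.

Definition close {X Y : Type} (dY : Y -> Y -> R) (f f' : X -> Y) : Prop :=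
  exists C : R, forall x, dY (f x) (f' x) <= C.

Definition mutually_inverse_coarse_equivalences {X Y : Type}
  (dX : X -> X -> R) (dY : Y -> Y -> R) (f : X -> Y) (g : Y -> X) : Prop :=
  coarse dX dY f /\ coarse dY dX g /\
  close dY (fun y => f (g y)) (fun y => y) /\
  close dX (fun x => g (f x)) (fun x => x).

Definition coarse_equivalence {X Y : Type}
  (dX : X -> X -> R) (dY : Y -> Y -> R) (f : X -> Y) : Prop :=
  exists g : Y -> X, mutually_inverse_coarse_equivalences dX dY f g.

Definition bijective_fun {X Y : Type} (f : X -> Y) : Prop :=
  (forall x x', f x = f x' -> x = x') /\ (forall y, exists x, f x = y).

(* Fin(Y) is represented by lists: alpha x : list Y stands for the finite set
   of its elements. |A| <= |U_{x in A} alpha x| for a finite A (given by a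
   duplicate-free list LA) is expressed via a duplicate-free enumeration of
   the union. *)
Definition union_card_ge {X Y : Type} (alpha : X -> list Y) : Prop :=
  forall LA : list X, NoDup LA ->
    exists LB : list Y, NoDup LB /\
      (forall y, In y LB <-> exists x, In x LA /\ In y (alpha x)) /\
      (length LA <= length LB)%nat.

(* Main.v *)
Require Import Defs.
From Stdlib Require Import Reals List Lra.
From HB Require Import structures.
From mathcomp Require Import all_boot.
From mathcomp Require Import boolp classical_sets finmap.
From mathcomp Require Import zify.
Set Implicit Arguments. Unset Strict Implicit. Unset Printing Implicit Defensive.

Module HallM.
Local Open Scope fset_scope.

Section Hall.
Variables (X Y : choiceType) (alpha0 : X -> {fset Y}).

Definition Nb (S : X -> {fset Y}) (B : {fset X}) := \bigcup_(x <- B) S x.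
Definition Hall S := forall B : {fset X}, (#|` B| <= #|` Nb S B|)%N.

Lemma mem_Nb S B y : reflect (exists2 x, x \in B & y \in S x) (y \in Nb S B).
Proof.
apply: (iffP (bigfcupP _ _ _ _)) => [[x /andP[xB _] yS]|[x xB yS]]; exists x => //.
by rewrite xB.
Qed.

Lemma Nb_sub S S' B B' : {subset B <= B'} ->
  (forall x, x \in B -> S x `<=` S' x) -> Nb S B `<=` Nb S' B'.
Proof.
move=> BB SS; apply/fsubsetP => y /mem_Nb [x xB yS]; apply/mem_Nb; exists x.
  exact: BB.
by apply: (fsubsetP (SS x xB)).
Qed.

Definition Del (S : X -> {fset Y}) x0 y z := if z == x0 then S x0 `\ y else S z.

Lemma key S x0 y1 y2 B1 B2 : Hall S -> y1 != y2 -> y1 \in S x0 -> y2 \in S x0 ->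
  (#|` Nb (Del S x0 y1) B1| < #|` B1|)%N ->
  (#|` Nb (Del S x0 y2) B2| < #|` B2|)%N -> False.
Proof.
move=> HS y12 y1S y2S h1 h2.
have inB : forall y B, (#|` Nb (Del S x0 y) B| < #|` B|)%N -> x0 \in B.
  move=> y B h; apply/negPn/negP => x0B.
  have : Nb S B `<=` Nb (Del S x0 y) B.
    apply: Nb_sub => // z zB; rewrite /Del; case: eqP => [ez|_]; last exact: fsubset_refl.
    by move: x0B; rewrite -ez zB.
  move/fsubset_leq_card; have := HS B; lia.
have x0B1 := inB _ _ h1; have x0B2 := inB _ _ h2.
set P1 := Nb (Del S x0 y1) B1 in h1; set P2 := Nb (Del S x0 y2) B2 in h2.
set B1' := B1 `\ x0; set B2' := B2 `\ x0.
have c1 : #|` B1| = (1 + #|` B1'|)%N by rewrite (cardfsD1 x0) x0B1.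
have c2 : #|` B2| = (1 + #|` B2'|)%N by rewrite (cardfsD1 x0) x0B2.
have x0U : x0 \notin B1' `|` B2'.
  by apply/negP => /fsetUP [] /fsetD1P []; rewrite eqxx.
have cU : #|` x0 |` (B1' `|` B2')| = (1 + #|` B1' `|` B2'|)%N by rewrite cardfsU1 x0U.
have sU : Nb S (x0 |` (B1' `|` B2')) `<=` P1 `|` P2.
  apply/fsubsetP => y /mem_Nb [z /fset1UP [-> yS|/fsetUP [] /fsetD1P [zx zB] yS]];
    apply/fsetUP.
  - have [ey|ny] := eqVneq y y1.
      right; apply/mem_Nb; exists x0 => //; rewrite /Del eqxx; apply/fsetD1P.
      by rewrite ey.
    left; apply/mem_Nb; exists x0 => //; rewrite /Del eqxx; exact/fsetD1P.
  - by left; apply/mem_Nb; exists z => //; rewrite /Del (negbTE zx).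
  - by right; apply/mem_Nb; exists z => //; rewrite /Del (negbTE zx).
have sI : Nb S (B1' `&` B2') `<=` P1 `&` P2.
  apply/fsubsetP => y /mem_Nb [z /fsetIP [/fsetD1P [zx zB1] /fsetD1P [_ zB2]] yS].
  by apply/fsetIP; split; apply/mem_Nb; exists z => //; rewrite /Del (negbTE zx).
have := fsubset_leq_card sU; have := fsubset_leq_card sI.
have := HS (x0 |` (B1' `|` B2')); have := HS (B1' `&` B2').
have := cardfsUI P1 P2; have := cardfsUI B1' B2'.
lia.
Qed.


Lemma Nb1 S x : Nb S [fset x] = S x.
Proof.
apply/fsetP => y; apply/mem_Nb/idP => [[z /fset1P -> //]|yS]; exists x => //.
exact/fset1P.
Qed.

Lemma hall_inf : Hall alpha0 ->
  exists i : X -> Y, injective i /\ forall x, i x \in alpha0 x.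
Proof.
move=> H0.
pose T := {S : X -> {fset Y} | Hall S /\ forall x, S x `<=` alpha0 x}.
pose t0 : T := exist _ alpha0 (conj H0 (fun x => fsubset_refl _)).
pose R := fun a b : T => `[< forall x, proj1_sig b x `<=` proj1_sig a x >].
have [t tmin] : exists t, premaximal R t.
  apply: (ZL_preorder t0).
  - by move=> a; apply/asboolP => x; exact: fsubset_refl.
  - move=> a b c /asboolP ab /asboolP bc; apply/asboolP => x.
    exact: fsubset_trans (bc x) (ab x).
  move=> A Atot.
  have [[a0 Aa0]|Aempty] := pselect (exists a, A a); last first.
    by exists t0 => s As; exfalso; apply: Aempty; exists s.
  pose tl x := [fset y in alpha0 x | `[< forall s, A s -> y \in proj1_sig s x >]].
  have tlE x y : y \in tl x = (y \in alpha0 x) && `[< forall s, A s -> y \in proj1_sig s x >].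
    by rewrite !inE.
  have mn : forall s1 s2, A s1 -> A s2 -> exists s, [/\ A s, R s1 s & R s2 s].
    move=> s1 s2 A1 A2; have [r12|r21] := Atot _ _ A1 A2.
      by exists s2; split => //; apply/asboolP => x; exact: fsubset_refl.
    by exists s1; split => //; apply/asboolP => x; exact: fsubset_refl.
  have one : forall x (L : seq Y), exists s, A s /\
      forall y, y \in L -> y \in proj1_sig s x -> y \in tl x.
    move=> x; elim => [|y L [s [As hs]]]; first by exists a0.
    have [[s' [As' ys']]|nos] := pselect (exists s', A s' /\ y \notin proj1_sig s' x).
      have [s'' [As'' /asboolP r1 /asboolP r2]] := mn _ _ As As'.
      exists s''; split => // z; rewrite inE => /orP [/eqP -> yz|zL zs].
        by move: ys' => /negP []; apply: (fsubsetP (r2 x)).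
      by apply: hs => //; apply: (fsubsetP (r1 x)).
    exists s; split => // z; rewrite inE => /orP [/eqP -> yz|zL zs]; last exact: hs.
    rewrite tlE; apply/andP; split.
      by apply: (fsubsetP ((proj2 (proj2_sig s)) x)).
    apply/asboolP => s' As'; apply/negPn/negP => ns; apply: nos; exists s'; split => //.
  have all : forall L : seq X, exists s, A s /\
      forall x, x \in L -> proj1_sig s x `<=` tl x.
    elim => [|x L [s [As hs]]]; first by exists a0.
    have [s' [As' hs']] := one x (enum_fset (alpha0 x)).
    have [s'' [As'' /asboolP r1 /asboolP r2]] := mn _ _ As As'.
    exists s''; split => // z; rewrite inE => /orP [/eqP ->|zL].
      apply/fsubsetP => y ys; apply: hs'; last exact: (fsubsetP (r2 x)).
      by apply: (fsubsetP ((proj2 (proj2_sig s')) x)); exact: (fsubsetP (r2 x)).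
    exact: fsubset_trans (r1 z) (hs z zL).
  have tlH : Hall tl /\ forall x, tl x `<=` alpha0 x.
    split; last by move=> x; apply/fsubsetP => y; rewrite tlE => /andP [].
    move=> B; have [s [As hs]] := all (enum_fset B).
    apply: leq_trans ((proj1 (proj2_sig s)) B) _; apply/fsubset_leq_card/Nb_sub => //.
  exists (exist _ tl tlH) => s As; apply/asboolP => x /=; apply/fsubsetP => y.
  by rewrite tlE => /andP [_ /asboolP]; apply.
case: t tmin => S [HS Ssub] tmin.
have minS : forall S', Hall S' -> (forall x, S' x `<=` S x) -> forall x, S x `<=` S' x.
  move=> S' HS' sub.
  have H' : Hall S' /\ forall x, S' x `<=` alpha0 x.
    by split => // x; exact: fsubset_trans (sub x) (Ssub x).
  have /tmin /asboolP h : R (exist _ S (conj HS Ssub)) (exist _ S' H').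
    by apply/asboolP.
  exact: h.
have card1 : forall x, #|` S x| = 1%N.
  move=> x0; apply/eqP; rewrite eqn_leq; apply/andP; split; last first.
    by have := HS [fset x0]; rewrite Nb1 cardfs1.
  rewrite leqNgt; apply/negP => gt1.
  have : S x0 != fset0 by rewrite -cardfs_gt0; lia.
  case/fset0Pn => y1 y1S.
  have : S x0 `\ y1 != fset0.
    rewrite -cardfs_gt0; move: gt1; rewrite (cardfsD1 y1) y1S; lia.
  case/fset0Pn => y2 /fsetD1P [y21 y2S].
  have bad : forall y, y \in S x0 -> exists B, (#|` Nb (Del S x0 y) B| < #|` B|)%N.
    move=> y yS; apply: contrapT => nB.
    have HD : Hall (Del S x0 y).
      move=> B; rewrite leqNgt; apply/negP => hB; apply: nB; by exists B.
    have sub : forall x, Del S x0 y x `<=` S x.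
      move=> x; rewrite /Del; case: eqP => [->|_]; last exact: fsubset_refl.
      exact: fsubsetDl.
    have := fsubsetP (minS _ HD sub x0) y yS; rewrite /Del eqxx.
    by case/fsetD1P; rewrite eqxx.
  have [B1 h1] := bad y1 y1S; have [B2 h2] := bad y2 y2S.
  by apply: (key HS _ y1S y2S h1 h2); rewrite eq_sym.
have [i hi] := choice (fun x => (cardfs1P (S x) (introT eqP (card1 x)))).
exists i; split; last first.
  by move=> x; apply: (fsubsetP (Ssub x)); rewrite hi; exact/fset1P.
move=> x x' eix; apply/eqP; apply/negPn/negP => nx.
have := HS [fset x; x']; rewrite cardfs2 nx.
have : Nb S [fset x; x'] `<=` [fset i x].
  apply/fsubsetP => y /mem_Nb [z]; rewrite in_fset2 => /orP [] /eqP ->;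
    by rewrite hi // eix.
move/fsubset_leq_card; rewrite cardfs1; lia.
Qed.
End Hall.
End HallM.
Import HallM.

Lemma In_mem (T : eqType) (x : T) (s : seq T) : In x s <-> x \in s.
Proof.
elim: s => [|a s IH] //=; rewrite inE; split.
  by case=> [->|/IH ->]; rewrite ?eqxx ?orbT.
by case/orP => [/eqP ->|/IH]; [left|right].
Qed.

Lemma NoDup_uniq (T : eqType) (s : seq T) : NoDup s <-> uniq s.
Proof.
elim: s => [|a s IH] /=; first by split => // _; constructor.
split.
  move=> h; inversion h; subst; apply/andP; split; last exact/IH.
  by apply/negP => /In_mem.
case/andP => an us; constructor; last exact/IH.
by move/In_mem; apply/negP.
Qed.

Lemma hall_types (X Y : Type) (alpha : X -> list Y) : union_card_ge alpha ->
  exists i : X -> Y, (forall x x', i x = i x' -> x = x') /\ forall x, In (i x) (alpha x).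
Proof.
move=> H.
pose alpha0 := fun x : {classic X} => seq_fset tt (alpha x : seq {classic Y}).
have [|i [ii hi]] := @hall_inf {classic X} {classic Y} alpha0.
  move=> B.
  have [LB [nLB [hLB le]]] := H (enum_fset B) (proj2 (NoDup_uniq _) (fset_uniq B)).
  apply: leq_trans (introT leP le) _.
  apply: (@uniq_leq_size _ (LB : seq {classic Y})).
    exact/NoDup_uniq.
  move=> y yLB; have /hLB [x [xB yx]] := proj2 (@In_mem {classic Y} y LB) yLB.
  apply/mem_Nb; exists x; first exact: (proj1 (@In_mem {classic X} x _) xB).
  by rewrite seq_fsetE; apply: (proj1 (@In_mem {classic Y} y _)).
exists i; split => // x; apply: (proj2 (@In_mem {classic Y} _ _)).
by have := hi x; rewrite seq_fsetE.
Qed.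

Lemma SB (X Y : Type) (i : X -> Y) (j : Y -> X) :
  (forall x x', i x = i x' -> x = x') -> (forall y y', j y = j y' -> y = y') ->
  exists h : X -> Y, bijective_fun h /\ forall x, h x = i x \/ j (h x) = x.
Proof.
move=> ii jj.
pose A x := exists n x0, (forall y, j y <> x0) /\ x = iter n (fun z => j (i z)) x0.
have ex : forall x, exists y, (A x /\ y = i x) \/ (~ A x /\ j y = x).
  move=> x; have [Ax|nAx] := pselect (A x); first by exists (i x); left.
  have [[y jy]|ny] := pselect (exists y, j y = x); first by exists y; right.
  exfalso; apply: nAx; exists 0%N, x; split => // y jy; apply: ny; by exists y.
have [h hh] := choice ex.
exists h; split; last by move=> x; case: (hh x) => [[_ ->]|[_ ->]]; [left|right].
split.
  move=> x x' e.
  case: (hh x) => [[Ax ex1]|[nAx ex1]]; case: (hh x') => [[Ax' ex2]|[nAx' ex2]].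
  - by apply: ii; rewrite -ex1 -ex2.
  - exfalso; apply: nAx'; case: Ax => n [x0 [n0 exq]]; exists n.+1, x0; split => //.
    by rewrite -ex2 -e ex1 exq.
  - exfalso; apply: nAx; case: Ax' => n [x0 [n0 exq]]; exists n.+1, x0; split => //.
    by rewrite -ex1 e ex2 exq.
  - by rewrite -ex1 -ex2 e.
move=> y.
have [Ajy|nAjy] := pselect (A (j y)).
  case: Ajy => [[|n] [x0 [n0 e]]]; first by exfalso; apply: (n0 y).
  have e' := jj _ _ e.
  exists (iter n (fun z => j (i z)) x0).
  have Az : A (iter n (fun z => j (i z)) x0) by exists n, x0.
  by case: (hh (iter n (fun z => j (i z)) x0)) => [[_ ->]|[]].
exists (j y); case: (hh (j y)) => [[]|[_ e]] //; exact: jj.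
Qed.

Open Scope R_scope.

Theorem lemma3p4 (X Y : Type) (dX : X -> X -> R) (dY : Y -> Y -> R)
  (hmX : is_metric dX) (hmY : is_metric dY) (huX : ulf dX) (huY : ulf dY)
  (alpha : X -> list Y) (beta : Y -> list X)
  (Bij1 : forall (f : X -> Y) (g : Y -> X),
      (forall x, In (f x) (alpha x)) -> (forall y, In (g y) (beta y)) ->
      mutually_inverse_coarse_equivalences dX dY f g)
  (Bij2a : union_card_ge alpha) (Bij2b : union_card_ge beta) :
  forall f : X -> Y, (forall x, In (f x) (alpha x)) ->
    exists h : X -> Y, bijective_fun h /\ coarse_equivalence dX dY h /\
      close dY f h.
Proof.
move=> f hf.
have [i [ii hi]] := hall_types Bij2a.
have [j [jj hj]] := hall_types Bij2b.
have [h [hb hp]] := SB ii jj.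
have hp' : forall x, In (h x) (alpha x) \/ In x (beta (h x)).
  move=> x; case: (hp x) => e; [left; rewrite e | right; rewrite -{1}e] => //.
case: (hb) => hinj hsurj.
have [hinv hinvK] := choice hsurj.
pose fs x := match pselect (In (h x) (alpha x)) with left _ => h x | right _ => f x end.
have hfs : forall x, In (fs x) (alpha x).
  by move=> x; rewrite /fs; destruct (pselect (In (h x) (alpha x))).
pose gs y := match pselect (In (hinv y) (beta y)) with left _ => hinv y | right _ => j y end.
have hgs : forall y, In (gs y) (beta y).
  by move=> y; rewrite /gs; destruct (pselect (In (hinv y) (beta y))).
case: hmX => [dX0 [dXe [dXs dXt]]]; case: hmY => [dY0 [dYe [dYs dYt]]].
have [cf [cg [[C1 HC1] [C2 HC2]]]] := Bij1 f gs hf hgs.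
have [cfs [_ [[C3 HC3] _]]] := Bij1 fs gs hfs hgs.
have [s [s0 hs]] : exists s, 0 < s /\ forall x x', dX x x' <= Rmax C2 1 -> dY (fs x) (fs x') <= s.
  apply: cfs; have := Rmax_r C2 1; lra.
pose Ch := Rmax (Rmax C1 (C3 + s)) 0.
have Ch0 : 0 <= Ch by apply: Rmax_r.
have ChA : C1 <= Ch /\ C3 + s <= Ch.
  have := Rmax_l (Rmax C1 (C3 + s)) 0; have := Rmax_l C1 (C3 + s);
  have := Rmax_r C1 (C3 + s); rewrite /Ch; lra.
have close_fh : forall x, dY (f x) (h x) <= Ch.
  move=> x; case: (hp' x) => H.
  - have efs : fs x = h x by rewrite /fs; destruct (pselect (In (h x) (alpha x))).
    rewrite -efs.
    have t1 := dYt (f x) (fs (gs (f x))) (fs x).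
    have t2 : dY (fs (gs (f x))) (f x) <= C3 := HC3 (f x).
    have t3 : dY (fs (gs (f x))) (fs x) <= s.
      apply: hs; have : dX (gs (f x)) x <= C2 := HC2 x.
      have := Rmax_l C2 1; lra.
    rewrite dYs in t2; lra.
  - have egs : gs (h x) = x.
      have e : hinv (h x) = x by apply: hinj; rewrite hinvK.
      rewrite /gs; destruct (pselect (In (hinv (h x)) (beta (h x)))) as [_|n] => //.
      by exfalso; apply: n; rewrite e.
    have t : dY (f (gs (h x))) (h x) <= C1 := HC1 (h x).
    rewrite egs in t; lra.
exists h; split => //; split; last by exists Ch.
exists gs; split; [|split; [exact: cg|split]].
- move=> r r0; have [sf [sf0 hsf]] := cf r r0; exists (sf + 2 * Ch + 1); split.
    lra.
  move=> x x' d; have := hsf x x' d; have := close_fh x; have := close_fh x'.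
  have := dYt (h x) (f x) (h x'); have := dYt (f x) (f x') (h x').
  rewrite (dYs (h x) (f x)); lra.
- exists (Ch + C1) => y /=.
  have := dYt (h (gs y)) (f (gs y)) y; have := close_fh (gs y).
  have : dY (f (gs y)) y <= C1 := HC1 y.
  rewrite (dYs (h (gs y)) (f (gs y))); lra.
- have [s' [s'0 hs']] := cg (Ch + 1) ltac:(lra).
  exists (s' + C2) => x /=.
  have := dXt (gs (h x)) (gs (f x)) x.
  have : dX (gs (f x)) x <= C2 := HC2 x.
  have : dX (gs (h x)) (gs (f x)) <= s'.
    by apply: hs'; rewrite dYs; have := close_fh x; lra.
  lra.
Qed.
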